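(* Let $\mu^*\approx 0.01191$ be the unique root in $(0,1)$ of $81\mu=(1-\mu)^3$. For the Best-Fit algorithm in the random-order model restricted to inputs in which every item has size in $(1/4,1/2]$, $$\limsup_{m\to\infty}\ \sup_{I:\ \mathrm{Opt}(I)=m,\ \text{all sizes in }(1/4,1/2]}\ \frac{\mathbb E_\sigma[\mathrm{BF}(I_\sigma)]}{\mathrm{Opt}(I)}\le \frac32-\frac{\mu^*}{2}\approx 1.4941.$$
   Context: Bin packing: items with sizes in $(0,1]$ are to be partitioned into the minimum number $\mathrm{Opt}(I)$ of bins of total size at most $1$. Best-Fit (BF) packs each arriving item into the fullest bin in which it fits, opening a new bin if necessary; $\mathrm{BF}(L)$ is the number of bins it uses on list $L$. In the random-order model, the list $I=(x_1,\dots,x_n)$ is fixed by an adversary, $\sigma$ is a uniformly random permutation of $[n]$, and items arrive in the order $I_\sigma=(x_{\sigma(1)},\dots,x_{\sigma(n)})$. *)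

(* Defs.v *)
From HB Require Import structures.
From mathcomp Require Import all_boot all_order all_algebra all_fingroup.
From mathcomp Require Import all_classical all_reals all_analysis.
Set Implicit Arguments. Unset Strict Implicit. Unset Printing Implicit Defensive.
Import Order.TTheory GRing.Theory Num.Theory.
Local Open Scope ring_scope.

Section BinPacking.
Variable R : realType.

(* One Best-Fit step: [loads] is the list of current bin loads (in order of
   opening). The item [x] goes into a fullest bin among those where it fits
   (first such bin in case of ties -- ties do not affect the number of bins),
   otherwise a new bin is opened. *)
Definition bf_step (loads : seq R) (x : R) : seq R :=
  let fits := [seq i <- iota 0 (size loads) | nth 0 loads i + x <= 1] in
  match fits with
  | [::] => rcons loads x
  | i0 :: _ =>
      let j := foldl (fun j i => if nth 0 loads j < nth 0 loads i then i else j)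
                     i0 fits in
      set_nth 0 loads j (nth 0 loads j + x)
  end.

Definition BF (L : seq R) : nat := size (foldl bf_step [::] L).

Definition packable (n : nat) (x : 'I_n -> R) (k : nat) : Prop :=
  exists f : 'I_n -> 'I_k, forall j : 'I_k, \sum_(i < n | f i == j) x i <= 1.

Definition is_opt (n : nat) (x : 'I_n -> R) (m : nat) : Prop :=
  packable x m /\ forall k : nat, (k < m)%N -> ~ packable x k.

Definition permuted_list (n : nat) (x : 'I_n -> R) (s : 'S_n) : seq R :=
  [seq x (s i) | i <- enum 'I_n].

Definition expected_BF (n : nat) (x : 'I_n -> R) : R :=
  (\sum_(s : 'S_n) (BF (permuted_list x s))%:R) / (n`!)%:R.

Definition sizes_in_quarter_half (n : nat) (x : 'I_n -> R) : Prop :=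
  forall i : 'I_n, 1/4 < x i /\ x i <= 1/2.

Definition bf_ratio_sup (m : nat) : \bar R :=
  ereal_sup [set r : \bar R | exists (n : nat) (x : 'I_n -> R),
               [/\ sizes_in_quarter_half x, is_opt x m &
                   r = (expected_BF x / m%:R)%:E]].

End BinPacking.

(* Main.v *)
Require Import Defs.
From HB Require Import structures.
From mathcomp Require Import all_boot all_order all_algebra all_fingroup.
From mathcomp Require Import all_classical all_reals all_analysis.
From mathcomp Require Import all_solvable.
From mathcomp Require Import lra zify.
Import Order.TTheory GRing.Theory Num.Theory.
Local Open Scope ring_scope.
Set Implicit Arguments. Unset Strict Implicit. Unset Printing Implicit Defensive.

Ltac clia := repeat match goal with H : _ |- _ => clear H end; lia.

Section Dyn.
Variable R : realType.
Implicit Types (st : seq R) (x : R).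

Lemma foldl_argmax (f : nat -> R) (s : seq nat) i0 :
  let j := foldl (fun j i => if f j < f i then i else j) i0 s in
  j \in i0 :: s /\ forall i, i \in i0 :: s -> f i <= f j.
Proof.
elim: s i0 => [|a s IH] i0 /=.
  by split; [rewrite inE | move=> i; rewrite inE => /eqP ->].
case: ifP => H.
  have [H1 H2] := IH a; split.
    by move: H1; rewrite !inE => /orP[->|->]; rewrite ?orbT.
  move=> i; rewrite inE => /orP[/eqP->|Hi]; last exact: H2.
  apply: le_trans (ltW H) _; apply: H2; exact: mem_head.
have [H1 H2] := IH i0; split.
  by move: H1; rewrite !inE => /orP[->|->]; rewrite ?orbT.
move=> i; rewrite !inE => /orP[/eqP->|/orP[/eqP->|Hi]].
- apply: H2; exact: mem_head.
- apply: le_trans (H2 i0 (mem_head _ _)); by rewrite leNgt H.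
- apply: H2; by rewrite inE Hi orbT.
Qed.

Lemma set_nth_split st j y : (j < size st)%N ->
  set_nth 0 st j y = take j st ++ y :: drop j.+1 st.
Proof.
elim: st j => [|a s IH] [|j] //= H.
- by rewrite drop0.
- by rewrite IH.
Qed.

Lemma nth_split st j : (j < size st)%N ->
  st = take j st ++ nth 0 st j :: drop j.+1 st.
Proof. by move=> H; rewrite -drop_nth // cat_take_drop. Qed.


Lemma fits_mem st x i :
  (i \in [seq i <- iota 0 (size st) | nth 0 st i + x <= 1]) =
  (i < size st)%N && (nth 0 st i + x <= 1).
Proof. by rewrite mem_filter mem_iota add0n andbC. Qed.

Lemma bf_step_cases st x :
  ((forall l, l \in st -> 1 < l + x) /\ bf_step st x = rcons st x) \/
  exists s1 s2 lj, [/\ st = s1 ++ lj :: s2, bf_step st x = s1 ++ (lj + x) :: s2,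
     lj + x <= 1 & forall l, l \in st -> l + x <= 1 -> l <= lj].
Proof.
rewrite /bf_step.
set fits := [seq i <- iota 0 (size st) | nth 0 st i + x <= 1].
have Hf := fits_mem st x.
case E: fits => [|i0 rest].
  left; split => // l Hl; rewrite ltNge; apply/negP => Hle.
  have Hi : index l st \in fits by rewrite Hf index_mem Hl nth_index.
  by rewrite E in Hi.
right.
have [H1 H2] := foldl_argmax (fun i => nth 0 st i) (i0 :: rest) i0.
set j := foldl _ _ _ in H1 H2 *.
have Hj : j \in fits.
  by rewrite E; move: H1; rewrite inE => /orP[/eqP->|//]; rewrite mem_head.
move: (Hj); rewrite Hf => /andP[Hjs Hjx].
exists (take j st), (drop j.+1 st), (nth 0 st j); split => //.
- exact: nth_split.
- exact: set_nth_split.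
- move=> l Hl Hlx.
  have Hi : index l st \in fits by rewrite Hf index_mem Hl nth_index.
  rewrite -(nth_index 0 Hl); apply: H2; rewrite inE -E Hi orbT //.
Qed.

Definition okx x := (1/4 < x) && (x <= 1/2).
Definition sg st := count (fun l => l <= 1/2) st.
Definition lm st : nat := has (fun l => (1/2 < l) && (l <= 2/3)) st.
Definition inv st := all (fun l => (1/4 < l) && (l <= 1)) st && (sg st <= 1)%N.
Definition small st := all (fun l => (l <= 1/2) ==> (l <= 1/3)) st.
Definition PhiLe st st' (c : nat) :=
  (4 * size st' + 2 * sg st + lm st <= 4 * size st + 2 * sg st' + lm st' + c)%N.


Lemma step st x : inv st -> okx x ->
  inv (bf_step st x) /\
  [\/ PhiLe st (bf_step st x) 1,
      [/\ sg st = 0%N, sg (bf_step st x) = 1%N, PhiLe st (bf_step st x) 2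
        & (x <= 1/3 -> small (bf_step st x))] |
      [/\ sg st = 1%N, sg (bf_step st x) = 0%N, PhiLe st (bf_step st x) 2
        & (x <= 1/3 -> small st -> PhiLe st (bf_step st x) 1)]].
Proof.
move=> /andP[Hall Hsg] /andP[x1 x2].
case: (bf_step_cases st x) => [[Hno ->] | [s1 [s2 [lj [Est -> Hfit Hmax]]]]].
  have sg0 : sg st = 0%N.
    apply/eqP; rewrite eqn0Ngt -has_count; apply/hasPn => l Hl /=.
    rewrite -ltNge; have := Hno l Hl; lra.
  have sg1 : sg (rcons st x) = 1%N by rewrite /sg -cats1 count_cat /= -/(sg st) sg0 x2.
  have lmE : lm (rcons st x) = lm st.
    rewrite /lm -cats1 has_cat /=.
    have -> : (1/2 < x) = false. apply/negbTE. rewrite -leNgt. exact: x2. by rewrite /= !orbF.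
  split.
    rewrite /inv sg1 andbT -cats1 all_cat Hall /= andbT.
    by apply/andP; split; lra.
  apply: Or32; split => //.
    by rewrite /PhiLe lmE sg0 sg1 size_rcons; clia.
  move=> x3; rewrite /small -cats1 all_cat /= x3 implybT !andbT.
  apply/allP => l Hl; have := Hno l Hl => H.
  by have -> : (l <= 1/2) = false by apply/negbTE; rewrite -ltNge; lra.
have Hlj : lj \in st by rewrite Est mem_cat mem_head orbT.
have /andP[lj1 lj2] := allP Hall _ Hlj.
have Hs : size (s1 ++ (lj + x) :: s2) = size st by rewrite Est !size_cat.
have Hinv' : all (fun l => (1/4 < l) && (l <= 1)) (s1 ++ (lj + x) :: s2).
  move: Hall; rewrite Est !all_cat /= => /and3P[-> _ ->].
  rewrite !andbT; apply/andP; split => //; lra.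
have Hlm1 : forall s, (lm s <= 1)%N by move=> s; rewrite /lm; case: has.
case: (lerP lj (1/2)) => Hl.
  have sgst : sg st = 1%N.
    apply/eqP; rewrite eqn_leq Hsg /= lt0n -lt0n -has_count.
    by apply/hasP; exists lj.
  have sgst' : sg (s1 ++ (lj + x) :: s2) = 0%N.
    move: sgst; rewrite /sg Est !count_cat /= Hl.
    have -> : (lj + x <= 1/2) = false by apply/negbTE; rewrite -ltNge; lra.
    clia.
  have lmle : (lm st <= lm (s1 ++ (lj + x)%R :: s2))%N.
    rewrite /lm Est !has_cat /=.
    have -> : (1/2 < lj) = false by apply/negbTE; rewrite -leNgt.
    by case: (has _ s1); case: (has _ s2); case: (1 / 2 < lj + x <= 2 / 3)%R.
  split.
    by rewrite /inv Hinv' sgst'.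
  apply: Or33; split => //.
    by move: lmle; rewrite /PhiLe Hs sgst sgst'; clia.
  move=> x3 Hsm.
  have lj3 : lj <= 1/3 by have := allP Hsm _ Hlj; rewrite Hl.
  have lm1 : lm (s1 ++ (lj + x) :: s2) = 1%N.
    rewrite /lm has_cat /=.
    have -> : (1/2 < lj + x) && (lj + x <= 2/3) by apply/andP; split; lra.
    by rewrite orbT.
  have lm0 : lm st = 0%N.
    rewrite /lm; case E: has => //; move/hasP: E => [l Hl1 /andP[l1 l2]].
    have := Hmax l Hl1; have -> : l + x <= 1 by lra.
    move=> /(_ isT) H; exfalso; lra.
  rewrite /PhiLe Hs sgst sgst' lm1 lm0; clia.
have sgE : sg (s1 ++ (lj + x) :: s2) = sg st.
  rewrite /sg Est !count_cat /=.
  have -> : (lj + x <= 1/2) = false by apply/negbTE; rewrite -ltNge; lra.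
  by have -> : (lj <= 1/2) = false by apply/negbTE; rewrite -ltNge.
split.
  by rewrite /inv Hinv' sgE.
apply: Or31; rewrite /PhiLe Hs sgE.
by move: (Hlm1 st); clia.
Qed.


Lemma step2 st x : inv st -> okx x -> inv (bf_step st x) /\ PhiLe st (bf_step st x) 2.
Proof.
move=> H1 H2; have [Hi H] := step H1 H2; split => //.
by case: H => [P|[_ _ P _]|[_ _ P _]]; move: P; rewrite /PhiLe; clia.
Qed.


Lemma block st a b c : inv st -> okx a -> okx b -> okx c ->
  let st3 := bf_step (bf_step (bf_step st a) b) c in
  inv st3 /\ PhiLe st st3 (6 - ((a <= 1/3) && (b <= 1/3) && (c <= 1/3))).
Proof.
move=> H0 Ha Hb Hc /=.
have [I1 P1] := step2 H0 Ha.
have [I2 P2] := step2 I1 Hb.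
have [I3 P3] := step2 I2 Hc.
split => //.
case: (boolP ((a <= 1/3) && (b <= 1/3) && (c <= 1/3))) => /= [/andP[/andP[a3 b3] c3]|_];
  last by move: P1 P2 P3; rewrite /PhiLe; clia.
have [_ S1] := step H0 Ha.
have [_ S2] := step I1 Hb.
have [_ S3] := step I2 Hc.
case: S1 => [Q1|[s0 s1 Q1 sm1]|[s0 s1 Q1 _]].
- by move: P1 P2 P3 Q1; rewrite /PhiLe; clia.
- have sm := sm1 a3.
  case: S2 => [Q2|[s0' s1' Q2 _]|[s0' s1' Q2 sm2]].
  + by move: P1 P2 P3 Q2; rewrite /PhiLe; clia.
  + by move: s0' s1; clia.
  + by move: P1 P2 P3 (sm2 b3 sm); rewrite /PhiLe; clia.
- case: S2 => [Q2|[s0' s1' Q2 sm2]|[s0' s1' Q2 _]].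
  + by move: P1 P2 P3 Q2; rewrite /PhiLe; clia.
  + have sm := sm2 b3.
    case: S3 => [Q3|[s0'' s1'' Q3 _]|[s0'' s1'' Q3 sm3]].
    * by move: P1 P2 P3 Q3; rewrite /PhiLe; clia.
    * by move: s0'' s1'; clia.
    * by move: P1 P2 P3 (sm3 c3 sm); rewrite /PhiLe; clia.
  + by move: s0' s1; clia.
Qed.

Fixpoint Krec (L : seq R) : nat :=
  match L with
  | a :: b :: c :: L' => ((a <= 1/3) && (b <= 1/3) && (c <= 1/3) : nat) + Krec L'
  | _ => 0
  end.

Lemma run_gen L st : inv st -> all okx L ->
  inv (foldl (@bf_step R) st L) /\ PhiLe st (foldl (@bf_step R) st L) (2 * size L).
Proof.
elim: L st => [|a L IH] st H0 /=; first by split => //; rewrite /PhiLe; clia.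
move=> /andP[Ha HL]; have [I1 P1] := step2 H0 Ha.
have [I2 P2] := IH _ I1 HL; split => //.
by move: P1 P2; rewrite /PhiLe; clia.
Qed.

Lemma Krec_le L : (Krec L <= size L)%N.
Proof.
move: {2}(size L) (leqnn (size L)) => n; elim: n L => [|n IH] [|a [|b [|c L]]] //=.
move=> Hs; have := IH L; have : (size L <= n)%N by move: Hs; clia.
move=> H /(_ H); case: (_ && _) => /=; clia.
Qed.

Lemma run n L st : (size L <= n)%N -> inv st -> all okx L ->
  PhiLe st (foldl (@bf_step R) st L) (2 * size L - Krec L).
Proof.
elim: n L st => [|n IH] L st.
  by case: L => //= _ H0 _; rewrite /PhiLe; clia.
case: L => [|a [|b [|c L]]] /= Hs H0.
- by rewrite /PhiLe; clia.
- by move=> HL; have [_ P] := @run_gen [:: a] st H0 HL; move: P; rewrite /PhiLe /=; clia.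
- by move=> HL; have [_ P] := @run_gen [:: a; b] st H0 HL; move: P; rewrite /PhiLe /=; clia.
move=> /and4P[Ha Hb Hc HL].
have [I3 P3] := block H0 Ha Hb Hc.
have Hs' : (size L <= n)%N by move: Hs; clia.
have P := IH L _ Hs' I3 HL.
have HK := Krec_le L.
move: P3 P HK; rewrite /PhiLe /=.
case: (_ && _) => /=; clia.
Qed.


Lemma BF_bound L : all okx L -> (4 * BF L + Krec L <= 2 * size L + 3)%N.
Proof.
move=> HL.
have I0 : inv ([::] : seq R) by [].
have [I1 _] := run_gen I0 HL.
have P := run (leqnn (size L)) I0 HL.
have HK := Krec_le L.
move: I1 => /andP[_ Hsg].
have Hlm : (lm (foldl (@bf_step R) [::] L) <= 1)%N by rewrite /lm; case: has.
move: P HK Hsg Hlm; rewrite /PhiLe /BF /sg /lm /=.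
set F := foldl _ _ _; clia.
Qed.

Lemma Krec_sum (L : seq R) : Krec L = \sum_(j < size L %/ 3)
  ((nth 0 L (3 * j) <= 1/3) && (nth 0 L (3 * j).+1 <= 1/3) && (nth 0 L (3 * j).+2 <= 1/3) : nat).
Proof.
move: {2}(size L) (leqnn (size L)) => n; elim: n L => [|n IH] [|a [|b [|c L]]] //=;
  try by move=> _; rewrite big_ord0.
move=> Hs.
have -> : ((size L).+3 %/ 3 = (size L %/ 3).+1)%N by rewrite -addn3 divnDr // divnn addn1.
rewrite big_ord_recl IH; last by move: Hs; clia.
have nS : forall (l : seq R) y k, nth 0 (y :: l) k.+1 = nth 0 l k by [].
congr (_ + _).
apply: eq_bigr => j _.
have -> : (3 * lift ord0 j = (3 * j).+3)%N by rewrite lift0; clia.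
by rewrite !nS.
Qed.

End Dyn.

Section Perm3.
Local Open Scope nat_scope.
Lemma perm3 n (p q r i j k : 'I_n) : uniq [:: p; q; r] -> uniq [:: i; j; k] ->
  exists t : 'S_n, [/\ t i = p, t j = q & t k = r].
Proof.
move=> Up Ui.
have n3 : 3 <= #|'I_n|.
  have := card_uniq_tuple (t := [tuple p; q; r]) Up => <-; exact: max_card.
have tr := ntransitive_weak n3 (Sym_trans 'I_n).
have d1 : [tuple i; j; k] \in 3.-dtuple([set: 'I_n]%SET) by rewrite inE Ui; apply/fintype.subsetP=> x; rewrite inE.
have d2 : [tuple p; q; r] \in 3.-dtuple([set: 'I_n]%SET) by rewrite inE Up; apply/fintype.subsetP=> x; rewrite inE.
have [a _ E] := atransP2 tr d1 d2.
exists a; move: E => /(congr1 val) /= [-> -> ->]; by [].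
Qed.

End Perm3.

Section Count.
Local Open Scope nat_scope.
Variable n : nat.
Variable A : {set 'I_n}.

Definition C3 (p q r : 'I_n) : nat :=
  \sum_(s : 'S_n) [&& s p \in A, s q \in A & s r \in A].

Lemma C3_inv p q r i j k : uniq [:: p; q; r] -> uniq [:: i; j; k] ->
  C3 i j k = C3 p q r.
Proof.
move=> Up Ui; have [t [ti tj tk]] := perm3 Up Ui.
rewrite /C3 (reindex_inj (mulgI t)) /=.
by apply: eq_bigr => s _; rewrite !permM ti tj tk.
Qed.

Lemma count3 (T : finType) (S : {set T}) :
  \sum_(a : T) \sum_(b : T) \sum_(c : T) ([&& uniq [:: a; b; c], a \in S, b \in S & c \in S] : nat)
  = #|S| * (#|S| - 1) * (#|S| - 2).
Proof.
have E1 : forall a b, \sum_(c : T) ([&& uniq [:: a; b; c], a \in S, b \in S & c \in S] : nat)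
   = ([&& a != b, a \in S & b \in S] : nat) * (#|S| - 2).
  move=> a b.
  rewrite (eq_bigr (fun c => ([&& a != b, a \in S & b \in S] : nat) *
                    ((c \in S :\ a :\ b) : nat))); last first.
    move=> c _; rewrite /= !inE !negb_or.
    rewrite [c == b]eq_sym [c == a]eq_sym.
    by case: (a == b); case: (a == c); case: (b == c); case: (a \in S); case: (b \in S); case: (c \in S).
  rewrite -big_distrr /=.
  case: (boolP [&& a != b, a \in S & b \in S]) => [/and3P[ab aS bS]|] /=; last by rewrite !mul0n.
  rewrite !mul1n.
  rewrite (eq_bigr (fun c => if c \in S :\ a :\ b then 1 else 0)); last by move=> c _; case: (_ \in _).
  rewrite -big_mkcond sum1_card.
  have := cardsD1 a S; have := cardsD1 b (S :\ a).
  by rewrite aS !inE eq_sym ab bS /=; lia.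
have E2 : forall a, \sum_(b : T) \sum_(c : T) ([&& uniq [:: a; b; c], a \in S, b \in S & c \in S] : nat)
   = ((a \in S) : nat) * ((#|S| - 1) * (#|S| - 2)).
  move=> a; under eq_bigr do rewrite E1.
  rewrite (eq_bigr (fun b => ((a \in S) : nat) * (((b \in S :\ a) : nat) * (#|S| - 2)))); last first.
    by move=> b _; rewrite !inE [b == a]eq_sym; case: (a == b); case: (a \in S); case: (b \in S); rewrite /= ?mul0n ?mul1n.
  rewrite -big_distrr -big_distrl /=.
  case: (boolP (a \in S)) => aS /=; last by rewrite !mul0n.
  rewrite !mul1n; congr (_ * _).
  rewrite (eq_bigr (fun c => if c \in S :\ a then 1 else 0)); last by move=> c _; case: (_ \in _).
  rewrite -big_mkcond sum1_card.
  by have := cardsD1 a S; rewrite aS /=; lia.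
under eq_bigr do rewrite E2.
rewrite -big_distrl /= -mulnA; congr (_ * _).
rewrite (eq_bigr (fun c => if c \in S then 1 else 0)); last by move=> c _; case: (_ \in _).
by rewrite -big_mkcond sum1_card.
Qed.


Lemma total :
  \sum_(p : 'I_n) \sum_(q : 'I_n) \sum_(r : 'I_n) ((uniq [:: p; q; r] : nat) * C3 p q r)
  = n`! * (#|A| * (#|A| - 1) * (#|A| - 2)).
Proof.
have E : forall s : 'S_n,
    \sum_(p : 'I_n) \sum_(q : 'I_n) \sum_(r : 'I_n)
      ((uniq [:: p; q; r] : nat) * [&& s p \in A, s q \in A & s r \in A])
    = #|A| * (#|A| - 1) * (#|A| - 2).
  move=> s; rewrite -count3; symmetry; rewrite (reindex_inj (@perm_inj _ s)) /=.
  apply: eq_bigr => p _; rewrite (reindex_inj (@perm_inj _ s)) /=.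
  apply: eq_bigr => q _; rewrite (reindex_inj (@perm_inj _ s)) /=.
  apply: eq_bigr => r _.
  rewrite !inE !(inj_eq (@perm_inj _ s)).
  by case: (p == q); case: (p == r); case: (q == r); case: (s p \in A); case: (s q \in A); case: (s r \in A).
transitivity (\sum_(s : 'S_n) (#|A| * (#|A| - 1) * (#|A| - 2))); last first.
  by rewrite sum_nat_const card_Sn.
under [in RHS]eq_bigr => s _ do rewrite -(E s).
rewrite /C3.
rewrite [RHS]exchange_big; apply: eq_bigr => p _.
rewrite [RHS]exchange_big; apply: eq_bigr => q _.
rewrite [RHS]exchange_big; apply: eq_bigr => r _.
by rewrite big_distrr.
Qed.

Lemma key p0 q0 r0 : uniq [:: p0; q0; r0] ->
  C3 p0 q0 r0 * (n * (n - 1) * (n - 2)) = n`! * (#|A| * (#|A| - 1) * (#|A| - 2)).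
Proof.
move=> U0; rewrite -total.
have := count3 [set: 'I_n]%SET; rewrite cardsT card_ord => <-.
rewrite big_distrr; apply: eq_bigr => p _.
rewrite big_distrr; apply: eq_bigr => q _.
rewrite big_distrr; apply: eq_bigr => r _.
rewrite !inE !andbT.
case: (boolP (uniq [:: p; q; r])) => U /=; last by rewrite muln0 mul0n.
by rewrite (C3_inv U0 U) muln1 mul1n.
Qed.

End Count.

Lemma bin_bound (R : realType) n (x : 'I_n -> R) (P : pred 'I_n) :
  (forall i, 1/4 < x i /\ x i <= 1/2) -> \sum_(i | P i) x i <= 1 ->
  (\sum_(i | P i) 1 <= 3)%N /\ (\sum_(i | P i) ((1/3 < x i)%R : nat) <= 2)%N.
Proof.
move=> Hx Hs.
set c := (\sum_(i | P i) 1)%N; set d := (\sum_(i | P i) ((1/3 < x i)%R : nat))%N.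
have dc : (d <= c)%N by apply: leq_sum => i _; case: (_ < _).
suff : (3 * c + d < 12)%N \/ c = 0%N.
  by case=> H; move: dc H; clia.
case: (boolP (has P (index_enum 'I_n))) => Hh; last first.
  by right; rewrite /c big_hasC.
left; rewrite -(ltr_nat R).
have E : ((3 * c + d)%N%:R : R) = \sum_(i | P i) ((3 + ((1/3 < x i)%R : nat))%N%:R).
  rewrite -natr_sum big_split /= /c /d big_distrr /=; congr (_ + _)%:R.
rewrite E; apply: (lt_le_trans (ltr_sum (G := fun i => 12 * x i) Hh _)).
  move=> i _ /=; have [h1 h2] := Hx i.
  case: (boolP (1/3 < x i)) => h /=.
    rewrite -[4%N]/(4%N) natrD; lra.
  rewrite addn0; rewrite -leNgt in h; lra.
rewrite -mulr_sumr; lra.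
Qed.

Lemma opt_bounds (R : realType) n (x : 'I_n -> R) m :
  sizes_in_quarter_half x -> packable x m ->
  (n <= 3 * m)%N /\ (#|[set i | (1/3 < x i)%R]| <= 2 * m)%N.
Proof.
move=> Hx [f Hf].
have B : forall j : 'I_m, (\sum_(i | f i == j) 1 <= 3)%N /\
      (\sum_(i | f i == j) ((1/3 < x i)%R : nat) <= 2)%N.
  by move=> j; apply: bin_bound.
split.
  have -> : n = (\sum_(i : 'I_n) 1)%N by rewrite big_const_ord iter_addn_0 mul1n.
  rewrite (partition_big f predT) //=.
  apply: (@leq_trans (\sum_(j < m) 3)%N); last by rewrite big_const_ord iter_addn_0; clia.
  by apply: leq_sum => j _; have [B1 _] := B j.
have -> : #|[set i | 1/3 < x i]| = (\sum_(i : 'I_n) ((1/3 < x i)%R : nat))%N.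
  rewrite -sum1dep_card big_mkcond /=; apply: eq_bigr => i _; by case: (_ < _).
rewrite (partition_big f predT) //=.
apply: (@leq_trans (\sum_(j < m) 2)%N); last by rewrite big_const_ord iter_addn_0; clia.
by apply: leq_sum => j _; have [_ B2] := B j.
Qed.

Lemma arith (R : realType) (M N a b mu : R) : 1000 <= M -> 0 <= mu <= 1/81 ->
  N <= 3 * M -> N - 2 * M <= a -> a <= N -> N - 2 <= 3 * b ->
  2 * (3 * M - N) < 3 + 2 * mu * M ->
  (2 * N + 3 - (6 - 2 * mu) * M) * (N * (N - 1) * (N - 2)) <= b * (a * (a - 1) * (a - 2)).
Proof.
move=> HM /andP[m0 m1] HN Ha aN Hb Hc.
have hN : 3 * M - 3/2 - M/81 < N by nra.
have hu : 49/50 * M <= a - 2 by nra.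
have hv : 149/50 * M <= N - 2 by nra.
have P1 : N * (N - 1) * (N - 2) <= 27 * (M * M * M).
  have : N * (N - 1) * (N - 2) <= N * N * N.
    have h0 : 0 <= N - 2 by nra.
    have h1 : N * (N - 1) <= N * N by nra.
    nra.
  have : N * N * N <= (3 * M) * (3 * M) * (3 * M).
    have h0 : 0 <= N by nra.
    have h1 : N * N <= (3 * M) * (3 * M) by nra.
    nra.
  move=> *; nra.
have P2 : 0 <= N * (N - 1) * (N - 2).
  have h0 : 0 <= N - 2 by nra.
  have h1 : 0 <= N * (N - 1) by nra.
  nra.
have F1 : 0 <= 2 * N + 3 - (6 - 2 * mu) * M by nra.
have F2 : 2 * N + 3 - (6 - 2 * mu) * M <= 3 + 2 * M / 81 by nra.
have L1 : (2 * N + 3 - (6 - 2 * mu) * M) * (N * (N - 1) * (N - 2))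
          <= (3 + 2 * M / 81) * (27 * (M * M * M)).
  apply: ler_pM => //; nra.
have L2 : (a - 2) * (a - 2) * (a - 2) <= a * (a - 1) * (a - 2).
  have h0 : 0 <= a - 2 by nra.
  have h1 : (a - 2) * (a - 2) <= a * (a - 1) by nra.
  nra.
have L3 : (49/50 * M) * (49/50 * M) * (49/50 * M) <= (a - 2) * (a - 2) * (a - 2).
  have h0 : 0 <= 49/50 * M by nra.
  have h1 : (49/50 * M) * (49/50 * M) <= (a - 2) * (a - 2) by nra.
  nra.
have Hb' : 149/150 * M <= b by nra.
have L4 : (149/150 * M) * ((49/50 * M) * (49/50 * M) * (49/50 * M))
          <= b * (a * (a - 1) * (a - 2)).
  apply: ler_pM; nra.
apply: le_trans L1 _; apply: le_trans _ L4.

have h3 : 0 <= M * M * M by nra.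
nra.
Qed.

Lemma limsup_le_ev (R : realType) (u : (\bar R)^nat) (l : \bar R) (N : nat) :
  (forall m, (N <= m)%N -> (u m <= l)%E) -> (limn_esup u <= l)%E.
Proof.
move=> H; rewrite limn_esup_lim (cvg_lim _ (@cvg_esups_inf R u)).
all: try done.
apply: (@le_trans _ _ (esups u N)); first by apply: ereal_inf_lbound; exists N.
apply: ge_ereal_sup => _ [k /= Nk <-]; exact: H.
Qed.


Section Main.
Variable R : realType.

Lemma nth_pl n' (x : 'I_n'.+1 -> R) (s : 'S_n'.+1) i : (i < n'.+1)%N ->
  nth 0 (permuted_list x s) i = x (s (inord i)).
Proof.
move=> Hi; rewrite /permuted_list (nth_map ord0) ?size_enum_ord //.
congr (x (s _)); apply: val_inj; rewrite /= inordK // nth_enum_ord //.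
Qed.

Lemma size_pl n (x : 'I_n -> R) (s : 'S_n) : size (permuted_list x s) = n.
Proof. by rewrite /permuted_list size_map size_enum_ord. Qed.

Lemma okx_pl n (x : 'I_n -> R) (s : 'S_n) : sizes_in_quarter_half x ->
  all (@okx R) (permuted_list x s).
Proof.
move=> Hx; apply/allP => y /mapP [i _ ->]; have [h1 h2] := Hx (s i).
by rewrite /okx h1 h2.
Qed.

Lemma K_pl n' (x : 'I_n'.+1 -> R) (s : 'S_n'.+1) :
  let A := [set i | x i <= 1/3] in
  Krec (permuted_list x s) = (\sum_(j < n'.+1 %/ 3)
     [&& s (inord (3 * j)) \in A, s (inord (3 * j).+1) \in A & s (inord (3 * j).+2) \in A])%N.
Proof.
move=> A; rewrite Krec_sum size_pl; apply: eq_bigr => j _.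
have Hj : (3 * j + 2 < n'.+1)%N.
  have := ltn_ord j; have := divn_eq n'.+1 3; have := ltn_pmod n'.+1 (isT : (0 < 3)%N).
  clia.
rewrite !nth_pl; try (move: Hj; clia).
by rewrite !inE andbA.
Qed.


Lemma sumK n' (x : 'I_n'.+1 -> R) :
  let A := [set i | x i <= 1/3] in
  ((\sum_(s : 'S_n'.+1) Krec (permuted_list x s)) * (n'.+1 * (n'.+1 - 1) * (n'.+1 - 2))
   = (n'.+1 %/ 3) * (n'.+1`! * (#|A| * (#|A| - 1) * (#|A| - 2))))%N.
Proof.
move=> A.
under eq_bigr => s _ do rewrite K_pl.
rewrite exchange_big /= big_distrl /=.
rewrite (eq_bigr (fun _ => n'.+1`! * (#|A| * (#|A| - 1) * (#|A| - 2))))%N.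
  by rewrite big_const_ord iter_addn_0 mulnC.
move=> j _.
have Hj : (3 * j + 2 < n'.+1)%N.
  have := ltn_ord j; have := divn_eq n'.+1 3; have := ltn_pmod n'.+1 (isT : (0 < 3)%N).
  clia.
rewrite -(@key _ A (inord (3 * j)) (inord (3 * j).+1) (inord (3 * j).+2)).
  by [].
rewrite /= !inE -!val_eqE /= !inordK; try (move: Hj; clia).
Qed.


Lemma inst_bound n (x : 'I_n -> R) m (mu : R) : sizes_in_quarter_half x -> packable x m ->
  0 <= mu <= 1/81 -> (1000 <= m)%N -> expected_BF x <= (3/2 - mu/2) * m%:R.
Proof.
move=> Hx Hp /andP[mu0 mu1] Hm.
have [Hn3 HnA] := opt_bounds Hx Hp.
have M1000 : 1000 <= (m%:R : R) by rewrite (ler_nat R 1000 m).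
case: n x Hx Hp Hn3 HnA => [|n'] x Hx Hp Hn3 HnA.
  rewrite /expected_BF big1 ?mul0r; first by apply: mulr_ge0; lra.
  move=> s _; have := size_pl x s; rewrite /BF; case: (permuted_list x s) => //.
set A := [set i | x i <= 1/3].
have HA : (#|[set i | (1/3 < x i)%R]| + #|A| = n'.+1)%N.
  have -> : [set i | (1/3 < x i)%R] = ~: A by apply/setP => i; rewrite !inE ltNge.
  by rewrite addnC cardsC card_ord.
have HB : (4 * (\sum_(s : 'S_n'.+1) BF (permuted_list x s)) +
          \sum_(s : 'S_n'.+1) Krec (permuted_list x s) <= n'.+1`! * (2 * n'.+1 + 3))%N.
  rewrite big_distrr -big_split /= -card_Sn -sum_nat_const.
  apply: leq_sum => s _; have := BF_bound (okx_pl s Hx); rewrite size_pl.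
  by rewrite mulnC.
have HK : _ := sumK x; simpl in HK.
rewrite -/A in HK.
pose SB : R := \sum_(s : 'S_n'.+1) (BF (permuted_list x s))%:R.
pose SK := \sum_(s : 'S_n'.+1) ((Krec (permuted_list x s))%:R : R).
pose F := ((n'.+1)`!)%:R : R.
pose N := ((n'.+1)%:R : R).
pose M := (m%:R : R).
pose a := (#|A|%:R : R).
pose b := ((n'.+1 %/ 3)%:R : R).
have F0 : 0 < F by rewrite /F ltr0n fact_gt0.
have H1 : 4 * SB + SK <= F * (2 * N + 3).
  have E2 : (((n'.+1)`! * (2 * n'.+1 + 3))%N%:R : R) = F * (2 * N + 3).
    by rewrite natrM natrD natrM.
  have E1 : ((4 * (\sum_(s : 'S_n'.+1) BF (permuted_list x s)) +
          \sum_(s : 'S_n'.+1) Krec (permuted_list x s))%N%:R : R) = 4 * SB + SK.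
    by rewrite natrD natrM !natr_sum.
  by rewrite -E1 -E2 ler_nat.
have SK0 : 0 <= SK by apply: sumr_ge0 => s _; exact: ler0n.
have HN : N <= 3 * M by move: Hn3; rewrite -(ler_nat R) natrM.
have HNa : N - 2 * M <= a.
  have : (n'.+1 <= 2 * m + #|A|)%N by move: HA HnA; clia.
  by rewrite -(ler_nat R) natrD natrM -/N -/M -/a => ?; lra.
rewrite /expected_BF -/SB -/F ler_pdivrMr //.
case: (boolP (2 * (3 * M - N) < 3 + 2 * mu * M)) => Hc; last first.
  rewrite -leNgt in Hc.
  have : F * (2 * N + 3) <= F * ((6 - 2 * mu) * M).
    by rewrite ler_pM2l //; lra.
  lra.
have n3 : (3 <= n'.+1)%N by rewrite -(ler_nat R) -/N; nra.
have a2 : (2 <= #|A|)%N by rewrite -(ler_nat R) -/a; nra.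
have Hb : N - 2 <= 3 * b.
  have : (n'.+1 <= 3 * (n'.+1 %/ 3) + 2)%N.
    have := divn_eq n'.+1 3; have := ltn_pmod n'.+1 (isT : (0 < 3)%N); clia.
  by rewrite -(ler_nat R) natrD natrM -/N -/b => ?; lra.
have aN : a <= N by rewrite ler_nat; move: HA; clia.
have Ar := arith M1000 (introT andP (conj mu0 mu1)) HN HNa aN Hb Hc.
have P3 : ((n'.+1 * (n'.+1 - 1) * (n'.+1 - 2))%N%:R : R) = N * (N - 1) * (N - 2).
  by rewrite !natrM !natrB //; move: n3; clia.
have A3 : ((#|A| * (#|A| - 1) * (#|A| - 2))%N%:R : R) = a * (a - 1) * (a - 2).
  by rewrite !natrM !natrB //; move: a2; clia.
have H2 : SK * (N * (N - 1) * (N - 2)) = b * (F * (a * (a - 1) * (a - 2))).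
  move: HK => /(congr1 (fun k => (k%:R : R))) HKR.
  rewrite [LHS]natrM [RHS]natrM [X in _ = _ * X]natrM P3 A3 natr_sum in HKR.
  exact: HKR.
have N3 : 3 <= N by rewrite /N (ler_nat R 3).
have P3pos : 0 < N * (N - 1) * (N - 2).
  by apply: mulr_gt0; [apply: mulr_gt0|]; lra.
have H3 : F * (2 * N + 3 - (6 - 2 * mu) * M) <= SK.
  rewrite -(ler_pM2r P3pos) H2.
  rewrite [b * (F * _)]mulrCA -[F * (2 * N + 3 - _) * _]mulrA ler_pM2l //.
lra.
Qed.

End Main.

Unset Implicit Arguments. Set Strict Implicit.

Theorem theorem1p4 (R : realType) (mu : R) :
  0 < mu < 1 -> 81 * mu = (1 - mu) ^+ 3 ->
  (limn_esup (@bf_ratio_sup R) <= (3 / 2 - mu / 2)%:E)%E.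
Proof.
move=> /andP[m0 m1] Hmu.
have mu1 : mu <= 1/81.
  have E : (1 - mu) ^+ 3 = (1 - mu) * ((1 - mu) * (1 - mu)) by rewrite !exprS expr0 mulr1.
  rewrite E in Hmu.
  have h1 : 0 <= (1 - mu) * (1 - mu) <= 1 by apply/andP; split; nra.
  nra.
apply: (@limsup_le_ev R _ _ 1000) => m Hm.
apply: ge_ereal_sup => _ [n [x [Hx [Hp _] ->]]].
rewrite lee_fin ler_pdivrMr; last by rewrite ltr0n; move: Hm; clia.
apply: inst_bound Hx Hp _ Hm.
by apply/andP; split; lra.
Qed.
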